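(* In the finite element setting described in the context, let each element mass matrix $M_e$ be symmetric positive definite, fix an integer $0<r<m$ and a constant $\alpha>0$, and for each element define $$\overline{M}_e=M_e+\alpha\,V_eV_e^T,\qquad V_e=M_eU_{e,2},$$ where $U_{e,2}\in\mathbb{R}^{m\times r}$ has as columns $M_e$-orthonormal eigenvectors of $(K_e,M_e)$ associated with its $r$ largest eigenvalues $\lambda_{m-r+1}(K_e,M_e),\dots,\lambda_m(K_e,M_e)$. Let $M=\sum_eL_e^TM_eL_e$ and $\overline{M}=\sum_eL_e^T\overline{M}_eL_e$. Then for all $i=1,\dots,n$, $$1\le\frac{\omega_i}{\overline{\omega}_i}\le\sqrt{1+\alpha},$$ where $\omega_i=\sqrt{\lambda_i(K,M)}$ and $\overline{\omega}_i=\sqrt{\lambda_i(K,\overline{M})}$.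
   Context: Finite element setting: there are $n$ global degrees of freedom and $N$ elements, each with $m$ local degrees of freedom. For each element $e$, $L_e\in\mathbb{R}^{m\times n}$ satisfies $L_e^T=[\mathbf{e}_{i_1},\dots,\mathbf{e}_{i_m}]$ for distinct indices $i_1,\dots,i_m$ (columns of $I_n$), and every global index appears for at least one element. Element matrices are assembled as $A=\sum_{e=1}^N L_e^TA_eL_e$. The global stiffness matrix is $K=\sum_e L_e^TK_eL_e$ with each $K_e$ symmetric positive semidefinite, and $K$ is assumed symmetric positive definite. Generalized eigenvalues $\lambda_1(A,B)\le\dots\le\lambda_k(A,B)$ of a pair ($A$ symmetric, $B$ symmetric positive definite) are numbered in ascending order; ''$M_e$-orthonormal'' means $U_{e,2}^TM_eU_{e,2}=I_r$. *)

(* Defs.v *)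
From mathcomp Require Import all_boot all_order all_algebra.
Set Implicit Arguments. Unset Strict Implicit. Unset Printing Implicit Defensive.
Import Order.TTheory GRing.Theory Num.Theory.
Local Open Scope ring_scope.

Section Defs.
Variable R : rcfType.

Definition sym_psd n (A : 'M[R]_n) :=
  A^T = A /\ forall x : 'cV[R]_n, 0 <= (x^T *m A *m x) 0 0.
Definition sym_pd n (A : 'M[R]_n) :=
  A^T = A /\ forall x : 'cV[R]_n, x != 0 -> 0 < (x^T *m A *m x) 0 0.

Definition gen_eigs n (A B : 'M[R]_n) (lam : 'I_n -> R) :=
  (forall i j : 'I_n, (i <= j)%N -> lam i <= lam j) /\
  exists X : 'M[R]_n,
    X^T *m B *m X = 1%:M /\ A *m X = B *m X *m diag_mx (\row_i lam i).

Definition Lmat m n (idx : 'I_m -> 'I_n) : 'M[R]_(m, n) :=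
  \matrix_(a < m, b < n) (b == idx a)%:R.

Definition assemble N m n (idx : 'I_N -> 'I_m -> 'I_n)
  (A : 'I_N -> 'M[R]_m) : 'M[R]_n :=
  \sum_(e < N) ((Lmat (idx e))^T *m A e *m Lmat (idx e)).

(* the k-th (0-based) entry of lam, 0 if out of range *)
Definition eig_nth m (lam : 'I_m -> R) (k : nat) : R :=
  nth 0 [seq lam i | i <- enum 'I_m] k.

(* eigenvalues lambda_{m-r+1}, ..., lambda_m (the r largest) *)
Definition top_eigs m r (lam : 'I_m -> R) : 'rV[R]_r :=
  \row_(j < r) eig_nth lam (m - r + j).
End Defs.

(* Main.v *)
Require Import Defs.
From mathcomp Require Import all_boot all_order all_algebra ring zify.
Import Order.TTheory GRing.Theory Num.Theory.
Set Implicit Arguments. Unset Strict Implicit. Unset Printing Implicit Defensive.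
Local Open Scope ring_scope.

Section H.
Variable R : rcfType.
Definition q n (x : 'cV[R]_n) (A : 'M[R]_n) := (x^T *m A *m x) 0 0.

Lemma q_mul n (X A : 'M[R]_n) (c : 'cV[R]_n) : q (X *m c) A = q c (X^T *m A *m X).
Proof. by rewrite /q trmx_mul !mulmxA. Qed.

Lemma q_diag n (c : 'cV[R]_n) (l : 'I_n -> R) :
  q c (diag_mx (\row_j l j)) = \sum_j c j 0 ^+ 2 * l j.
Proof.
rewrite /q mul_mx_diag mxE; apply: eq_bigr => j _; rewrite !mxE.
by rewrite expr2; ring.
Qed.

Lemma q_one n (c : 'cV[R]_n) : q c 1%:M = \sum_j c j 0 ^+ 2.
Proof.
rewrite /q mulmx1 mxE; apply: eq_bigr => j _; by rewrite !mxE expr2.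
Qed.

Lemma pid_col n k (z : 'cV[R]_n) j :
  (pid_mx k *m z) j 0 = if (j < k)%N then z j 0 else 0.
Proof.
rewrite mxE (bigD1 j) //= big1 ?addr0.
  by rewrite !mxE eqxx /=; case: ifP; rewrite ?mul1r ?mul0r.
move=> l H; rewrite !mxE; case: eqP => [/val_inj E|_]; last by rewrite mul0r.
by rewrite E eqxx in H.
Qed.

Lemma copid_col n k (z : 'cV[R]_n) j :
  (copid_mx k *m z) j 0 = if (k <= j)%N then z j 0 else 0.
Proof.
rewrite /copid_mx mulmxBl mul1mx.
have -> : (z - pid_mx k *m z) j 0 = z j 0 - (pid_mx k *m z) j 0 by rewrite !mxE.
rewrite pid_col; case: ltnP => _; by rewrite ?subrr ?subr0.

Qed.

Lemma tr_copid n k : (copid_mx k : 'M[R]_n)^T = copid_mx k.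
Proof. by rewrite /copid_mx linearB /= trmx1 tr_pid_mx. Qed.

Lemma q_delta n (l : 'I_n -> R) i :
  q (delta_mx i 0) (diag_mx (\row_j l j)) = l i.
Proof.
rewrite q_diag (bigD1 i) //= big1 ?addr0.
  by rewrite !mxE !eqxx /= expr1n mul1r.
move=> j /negbTE H; rewrite mxE H /=.
by rewrite expr2 !mul0r.
Qed.

Lemma eig_cmp n (A B C X Y : 'M[R]_n) (lam mu : 'I_n -> R) (c : R) :
  (forall x, 0 <= q x A) -> (forall x, q x B <= c * q x C) ->
  (forall i j : 'I_n, (i <= j)%N -> lam i <= lam j) ->
  (forall i j : 'I_n, (i <= j)%N -> mu i <= mu j) ->
  X^T *m B *m X = 1%:M -> A *m X = B *m X *m diag_mx (\row_i lam i) ->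
  Y^T *m C *m Y = 1%:M -> A *m Y = C *m Y *m diag_mx (\row_i mu i) ->
  forall i, mu i <= c * lam i.
Proof.
move=> Apsd Hc lmon mmon HX AX HY AY i.
have XA : X^T *m A *m X = diag_mx (\row_i lam i).
  by rewrite -mulmxA AX !mulmxA HX mul1mx.
have YA : Y^T *m A *m Y = diag_mx (\row_i mu i).
  by rewrite -mulmxA AY !mulmxA HY mul1mx.
have lam0 : 0 <= lam i.
  by have := Apsd (X *m delta_mx i 0); rewrite q_mul XA q_delta.
rewrite leNgt; apply/negP => Hlt.
have Xu : X \in unitmx by case: (mulmx1_unit HX).
have Yu : Y \in unitmx by case: (mulmx1_unit HY).
pose P1 := (pid_mx i.+1 : 'M[R]_n) *m X^T.
pose P2 := (copid_mx i : 'M[R]_n) *m Y^T.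
have ilt : (i < n)%N := ltn_ord i.
have r1 : \rank P1 = i.+1.
  by rewrite mxrankMfree ?row_free_unit ?unitmx_tr // rank_pid_mx.
have r2 : \rank P2 = (n - i)%N.
  by rewrite mxrankMfree ?row_free_unit ?unitmx_tr // rank_copid_mx // ltnW.
have : (P1 :&: P2)%MS != 0.
  rewrite -mxrank_eq0; have := mxrank_sum_cap P1 P2; rewrite r1 r2.
  have := rank_leq_col (P1 + P2)%MS. move=> *; apply/eqP; lia.
case/rowV0Pn => v vP v0.
have /submxP [D1 E1] : (v <= P1)%MS by apply: submx_trans vP (capmxSl _ _).
have /submxP [D2 E2] : (v <= P2)%MS by apply: submx_trans vP (capmxSr _ _).
pose c1 := (pid_mx i.+1 : 'M[R]_n) *m D1^T.
pose d := (copid_mx i : 'M[R]_n) *m D2^T.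
have x1 : v^T = X *m c1 by rewrite E1 /P1 !trmx_mul trmxK tr_pid_mx mulmxA.
have x2 : v^T = Y *m d by rewrite E2 /P2 !trmx_mul trmxK tr_copid mulmxA.
have eA1 : q v^T A = \sum_j c1 j 0 ^+ 2 * lam j by rewrite x1 q_mul XA q_diag.
have eB : q v^T B = \sum_j c1 j 0 ^+ 2 by rewrite x1 q_mul HX q_one.
have eA2 : q v^T A = \sum_j d j 0 ^+ 2 * mu j by rewrite x2 q_mul YA q_diag.
have eC : q v^T C = \sum_j d j 0 ^+ 2 by rewrite x2 q_mul HY q_one.
have i1 : q v^T A <= lam i * q v^T B.
  rewrite eA1 eB mulr_sumr; apply: ler_sum => j _; rewrite /c1 pid_col.
  case: ifP => Hj; last by rewrite expr2 !mul0r mulr0.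
  by rewrite [lam i * _]mulrC; apply: ler_wpM2l; [exact: sqr_ge0 | apply: lmon; rewrite -ltnS].
have i2 : mu i * q v^T C <= q v^T A.
  rewrite eA2 eC mulr_sumr; apply: ler_sum => j _; rewrite /d copid_col.
  case: ifP => Hj; last by rewrite expr2 !mul0r mulr0.
  by rewrite [mu i * _]mulrC; apply: ler_wpM2l; [exact: sqr_ge0 | apply: mmon].
have pos : 0 < q v^T C.
  rewrite eC lt_def sumr_ge0 ?andbT; last by move=> j _; exact: sqr_ge0.
  apply/eqP => S.
  have d0 : d = 0.
    apply/matrixP => j k; rewrite (ord1 k) [RHS]mxE; apply/eqP; rewrite -sqrf_eq0; apply/eqP.
    exact: (psumr_eq0P (fun j _ => sqr_ge0 (d j 0)) S).
  by move: v0; rewrite -(trmxK v) x2 d0 mulmx0 trmx0 eqxx.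
have : mu i * q v^T C <= c * lam i * q v^T C.
  apply: (le_trans i2); apply: (le_trans i1).
  by rewrite [c * lam i]mulrC -mulrA; apply: ler_wpM2l.
by rewrite ler_pM2r // leNgt Hlt.
Qed.

Lemma q_assemble N m n (idx : 'I_N -> 'I_m -> 'I_n) (F : 'I_N -> 'M[R]_m) x :
  q x (assemble idx F) = \sum_e q (Lmat R (idx e) *m x) (F e).
Proof.
rewrite /q /assemble mulmx_sumr mulmx_suml summxE; apply: eq_bigr => e _.
by rewrite trmx_mul !mulmxA.
Qed.

Lemma qD n (x : 'cV[R]_n) A B : q x (A + B) = q x A + q x B.
Proof. by rewrite /q mulmxDr mulmxDl mxE. Qed.

Lemma qZ n (x : 'cV[R]_n) a A : q x (a *: A) = a * q x A.
Proof. by rewrite /q -scalemxAr -scalemxAl mxE. Qed.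

Lemma qPPT n k (P : 'M[R]_(n, k)) y : q y (P *m P^T) = q (P^T *m y) 1%:M.
Proof. by rewrite /q mulmx1 trmx_mul trmxK !mulmxA. Qed.

Lemma proj_le m' r' (M : 'M[R]_m') (U : 'M[R]_(m', r')) y :
  M^T = M -> (forall x, 0 <= q x M) -> U^T *m M *m U = 1%:M ->
  q ((M *m U)^T *m y) 1%:M <= q y M.
Proof.
move=> Ms Mpsd HU.
set z := (M *m U)^T *m y.
have zT : z^T = y^T *m M *m U by rewrite /z trmx_mul trmxK mulmxA.
have Uz : U^T *m M *m y = z by rewrite /z trmx_mul Ms.
clearbody z.
have T4 : z^T *m (U^T *m M *m U) *m z = z^T *m z by rewrite HU mulmx1.
have T3 : z^T *m (U^T *m M *m y) = z^T *m z by rewrite Uz.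
rewrite !mulmxA in T4 T3.
have := Mpsd (y - U *m z).
rewrite /q [(_ - _)^T]linearB /= trmx_mul mulmxBl !mulmxBr !mulmxBl !mulmxA.
rewrite -zT T4 T3 mulmx1 subrr subr0 !mxE subr_ge0.
by [].
Qed.

Lemma elem m' r' (M : 'M[R]_m') (U : 'M[R]_(m', r')) (a : R) y :
  M^T = M -> (forall x, 0 <= q x M) -> U^T *m M *m U = 1%:M -> 0 <= a ->
  q y M <= q y (M + a *: ((M *m U) *m (M *m U)^T)) /\
  q y (M + a *: ((M *m U) *m (M *m U)^T)) <= (1 + a) * q y M.
Proof.
move=> Ms Mpsd HU a0; rewrite qD qZ qPPT; split.
  by rewrite lerDl mulr_ge0 // q_one sumr_ge0 // => j _; exact: sqr_ge0.
by rewrite mulrDl mul1r lerD2l ler_wpM2l // proj_le.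
Qed.

Lemma pd_psd n (A : 'M[R]_n) : sym_pd A -> forall x, 0 <= q x A.
Proof.
case=> _ H x; case: (eqVneq x 0) => [->|/H/ltW //].
by rewrite /q mulmx0 mxE.
Qed.
End H.

Theorem mainTheorem3 (R : rcfType) (n m N r : nat)
  (idx : 'I_N -> 'I_m -> 'I_n)
  (Ke Me : 'I_N -> 'M[R]_m) (U : 'I_N -> 'M[R]_(m, r))
  (lamE : 'I_N -> 'I_m -> R) (alpha : R)
  (lam lamb : 'I_n -> R) :
  (forall e, injective (idx e)) ->
  (forall g : 'I_n, exists e a, idx e a = g) ->
  (forall e, sym_psd (Ke e)) ->
  (forall e, sym_pd (Me e)) ->
  sym_pd (assemble idx Ke) ->
  (0 < r)%N -> (r < m)%N -> 0 < alpha ->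
  (forall e, gen_eigs (Ke e) (Me e) (lamE e)) ->
  (forall e, (U e)^T *m Me e *m U e = 1%:M) ->
  (forall e, Ke e *m U e = Me e *m U e *m diag_mx (top_eigs r (lamE e))) ->
  gen_eigs (assemble idx Ke) (assemble idx Me) lam ->
  gen_eigs (assemble idx Ke)
    (assemble idx (fun e => Me e + alpha *: ((Me e *m U e) *m (Me e *m U e)^T)))
    lamb ->
  forall i : 'I_n,
    1 <= Num.sqrt (lam i) / Num.sqrt (lamb i) <= Num.sqrt (1 + alpha).
Proof.
move=> _ _ _ Mpd Kpd _ _ a0 _ UM _ [lmon [X [HX AX]]] [bmon [Y [HY AY]]] i.
have Apsd := pd_psd Kpd.
have Mpsd e := pd_psd (Mpd e).
have Ms e : (Me e)^T = Me e by case: (Mpd e).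
have Hq1 x : q x (assemble idx Me) <= 1 * q x (assemble idx
     (fun e => Me e + alpha *: ((Me e *m U e) *m (Me e *m U e)^T))).
  rewrite mul1r !q_assemble; apply: ler_sum => e _.
  by case: (elem (Lmat R (idx e) *m x) (Ms e) (Mpsd e) (UM e) (ltW a0)).
have Hq2 x : q x (assemble idx
     (fun e => Me e + alpha *: ((Me e *m U e) *m (Me e *m U e)^T)))
     <= (1 + alpha) * q x (assemble idx Me).
  rewrite !q_assemble mulr_sumr; apply: ler_sum => e _.
  by case: (elem (Lmat R (idx e) *m x) (Ms e) (Mpsd e) (UM e) (ltW a0)).
have h1 := eig_cmp Apsd Hq1 lmon bmon HX AX HY AY i.
have h2 := eig_cmp Apsd Hq2 bmon lmon HY AY HX AX i.
rewrite mul1r in h1.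
have YA : Y^T *m assemble idx Ke *m Y = diag_mx (\row_i lamb i).
  by rewrite -mulmxA AY !mulmxA HY mul1mx.
have lb0 : 0 < lamb i.
  have e1 : q (delta_mx i 0) (1%:M : 'M[R]_n) = 1.
    have -> : (1%:M : 'M[R]_n) = diag_mx (\row_j (fun _ : 'I_n => 1) j).
      by rewrite -diag_const_mx; congr diag_mx; apply/matrixP => ? ?; rewrite !mxE.
    by rewrite q_delta.
  have nz : Y *m (delta_mx i 0 : 'cV[R]_n) != 0.
    apply/negP => /eqP E; move: e1; rewrite -HY -q_mul E /q mulmx0 mxE => /esym/eqP; by rewrite oner_eq0.
  case: Kpd => _ /(_ _ nz); rewrite -/(q _ _) q_mul YA q_delta //.
have l0 : 0 < lam i by apply: lt_le_trans h1.
have sb : 0 < Num.sqrt (lamb i) by rewrite sqrtr_gt0.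
apply/andP; split.
  by rewrite ler_pdivlMr // mul1r ler_sqrt // ltW.
rewrite ler_pdivrMr // -sqrtrM ?ler_sqrt //; last by rewrite addr_ge0 // ltW.
by rewrite mulr_ge0 // ltW // (lt_trans ltr01) // ltrDl.
Qed.
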